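(* Let $k$ be a field and $\mathsf{E}$ a left strictly locally finite $k$-linear category. Then the class of contrafinite left $\mathsf{E}$-modules is closed under extensions in the category of left $\mathsf{E}$-modules: if $0\to P\to T\to Q\to0$ is a short exact sequence of left $\mathsf{E}$-modules with $P$ and $Q$ contrafinite, then $T$ is contrafinite.
   Context: A small $k$-linear category $\mathsf{E}$ has $k$-vector spaces $\operatorname{Hom}_\mathsf{E}(x,y)$, $k$-bilinear associative composition and identities with $\mathrm{id}_x\ne0$. A left $\mathsf{E}$-module is a $k$-linear functor $P:\mathsf{E}\to k\text{-Vect}$ (action maps $\operatorname{Hom}_\mathsf{E}(x,y)\otimes_kP(x)\to P(y)$). Write $x\preceq y$ if there are $n\ge1$ and objects $x=z_0,\dots,z_n=y$ with $\operatorname{Hom}_\mathsf{E}(z_{i-1},z_i)\neq0$ for all $i$; $x\prec y$ means $x\preceq y$ and not $y\preceq x$. $\mathsf{E}$ is locally finite if all Hom spaces are finite-dimensional and every $\{z:x\preceq z\preceq y\}$ is finite; left strictly locally finite if moreover for every $y$ there is a finite set $X_y$ of objects with $x\prec y$ for $x\in X_y$ such that every $f:z\to y$ with $z\prec y$ equals $\sum_{i=1}^nh_ig_i$ ($n\ge0$) with $g_i:z\to x_i$, $h_i:x_i\to y$, $x_i\in X_y$. A left $\mathsf{E}$-module $P$ is contrafinite if for every object $y$ there is a finite set of objects $A$ such that the action map $\operatorname{Hom}_\mathsf{E}(x,y)\otimes_kP(x)\to P(y)$ vanishes for all $x\notin A$. *)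

(* Defs.v *)
From HB Require Import structures.
From mathcomp Require Import all_boot all_order all_algebra.
From Stdlib Require List.
Set Implicit Arguments. Unset Strict Implicit. Unset Printing Implicit Defensive.
Import GRing.Theory.

Local Open Scope ring_scope.

Record klinCat (k : fieldType) := KLinCat {
  Ob : Type;
  Hom : Ob -> Ob -> lmodType k;
  comp : forall x y z : Ob, Hom y z -> Hom x y -> Hom x z;
  idm : forall x : Ob, Hom x x;
  comp_linl : forall x y z (a : k) (h h' : Hom y z) (g : Hom x y),
      comp (a *: h + h') g = a *: comp h g + comp h' g;
  comp_linr : forall x y z (a : k) (h : Hom y z) (g g' : Hom x y),
      comp h (a *: g + g') = a *: comp h g + comp h g';
  comp_assoc : forall w x y z (h : Hom y z) (g : Hom x y) (f : Hom w x),
      comp h (comp g f) = comp (comp h g) f;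
  comp_idl : forall x y (f : Hom x y), comp (idm y) f = f;
  comp_idr : forall x y (f : Hom x y), comp f (idm x) = f;
  idm_neq0 : forall x, idm x != 0
}.


Section Defs.
Variables (k : fieldType) (E : klinCat k).

Definition findim (V : lmodType k) : Prop :=
  exists n (v : 'I_n -> V), forall f : V,
    exists c : 'I_n -> k, f = \sum_(i < n) c i *: v i.

Definition fin_obs (A : Ob E -> Prop) : Prop :=
  exists s : seq (Ob E), forall z, A z -> List.In z s.

Definition hom_nz (x y : Ob E) : Prop := exists f : Hom x y, f != 0.

Inductive preceq : Ob E -> Ob E -> Prop :=
  | preceq_step x y : hom_nz x y -> preceq x y
  | preceq_cons x z y : hom_nz x z -> preceq z y -> preceq x y.

Definition prec (x y : Ob E) : Prop := preceq x y /\ ~ preceq y x.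

Definition locally_finite : Prop :=
  (forall x y : Ob E, findim (Hom x y)) /\
  (forall x y, fin_obs (fun z => preceq x z /\ preceq z y)).

Definition left_strictly_locally_finite : Prop :=
  locally_finite /\
  forall y : Ob E, exists X : seq (Ob E),
    (forall x, List.In x X -> prec x y) /\
    forall z (f : Hom z y), prec z y ->
      exists n (xs : 'I_n -> Ob E)
             (g : forall i, Hom z (xs i)) (h : forall i, Hom (xs i) y),
        (forall i, List.In (xs i) X) /\
        f = \sum_(i < n) comp (h i) (g i).

(* Left E-modules: k-linear functors E -> k-Vect. *)
Record lmodule := LModule {
  Mob : Ob E -> lmodType k;
  act : forall x y, Hom x y -> Mob x -> Mob y;
  act_linl : forall x y (a : k) (f f' : Hom x y) (p : Mob x),
      act (a *: f + f') p = a *: act f p + act f' p;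
  act_linr : forall x y (a : k) (f : Hom x y) (p p' : Mob x),
      act f (a *: p + p') = a *: act f p + act f p';
  act_comp : forall x y z (g : Hom y z) (f : Hom x y) (p : Mob x),
      act (comp g f) p = act g (act f p);
  act_id : forall x (p : Mob x), act (idm x) p = p
}.
Arguments act _ {x y}.

Definition is_morphism (P Q : lmodule) (phi : forall x, Mob P x -> Mob Q x) : Prop :=
  (forall x (a : k) (p p' : Mob P x), phi x (a *: p + p') = a *: phi x p + phi x p') /\
  (forall x y (f : Hom x y) (p : Mob P x), phi y (act P f p) = act Q f (phi x p)).

Definition short_exact (P T Q : lmodule)
    (i : forall x, Mob P x -> Mob T x) (p : forall x, Mob T x -> Mob Q x) : Prop :=
  is_morphism i /\ is_morphism p /\
  (forall x, injective (i x)) /\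
  (forall x (q : Mob Q x), exists t, p x t = q) /\
  (forall x (t : Mob T x), p x t = 0 <-> exists u, i x u = t).

Definition contrafinite (P : lmodule) : Prop :=
  forall y : Ob E, exists A : seq (Ob E),
    forall x, ~ List.In x A ->
      forall (f : Hom x y) (v : Mob P x), act P f v = 0.

End Defs.

(* Main.v *)
Require Import Defs.
From mathcomp Require Import all_boot all_order all_algebra.
From Stdlib Require Import Classical ClassicalEpsilon.
From Stdlib Require List.
Import GRing.Theory.
Local Open Scope ring_scope.

Definition pb (Pr : Prop) : bool :=
  if excluded_middle_informative Pr then true else false.

Lemma pbE (Pr : Prop) : pb Pr <-> Pr.
Proof. by rewrite /pb; case: excluded_middle_informative. Qed.

Lemma count_lt (T0 : Type) (a b : T0 -> bool) (s : seq T0) x :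
  (forall z, a z -> b z) -> List.In x s -> b x -> ~~ a x ->
  (count a s < count b s)%N.
Proof.
move=> Hab; elim: s => [//|y s IH] /= [->|Hin] Hb Ha.
  rewrite (negbTE Ha) Hb add0n add1n ltnS.
  elim: s {IH} => [//|z s IHs] /=; apply: leq_add => //.
  by case: (boolP (a z)) => // /Hab ->.
have H := IH Hin Hb Ha; case: (boolP (a y)) => [/Hab ->|_] /=; first by rewrite ltn_add2l.
by rewrite add0n; apply: (leq_trans H); rewrite leq_addl.
Qed.

Lemma preceq_trans k (E : klinCat k) x y z :
  @preceq k E x y -> @preceq k E y z -> preceq x z.
Proof.
elim=> [a b H|a c b H _ IH] Hz; first exact: preceq_cons H Hz.
exact: preceq_cons H (IH Hz).
Qed.

Lemma prec_trans k (E : klinCat k) x y z :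
  @prec k E x y -> @prec k E y z -> @prec k E x z.
Proof.
move=> [H1 H2] [H3 H4]; split; first exact: preceq_trans H1 H3.
by move=> H; apply: H2; apply: preceq_trans H3 H.
Qed.

Lemma collect (O : Type) (Qp : O -> seq O -> Prop) (X : seq O) :
  (forall x B B', Qp x B -> (forall z, List.In z B -> List.In z B') -> Qp x B') ->
  (forall x, List.In x X -> exists B, Qp x B) ->
  exists B, forall x, List.In x X -> Qp x B.
Proof.
move=> Hmono; elim: X => [|x X IH] H; first by exists [::].
have [B HB] := H x (or_introl erefl).
have [B' HB'] := IH (fun z Hz => H z (or_intror Hz)).
exists (B ++ B') => z [<-|Hz].
  by apply: Hmono HB _ => u Hu; apply: List.in_or_app; left.
by apply: Hmono (HB' z Hz) _ => u Hu; apply: List.in_or_app; right.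
Qed.

Lemma act0 k (E : klinCat k) (P : lmodule E) (x y : Ob E) (t : Mob P x) :
  (@act _ _ P _ _) (0 : Defs.Hom x y) t = 0.
Proof.
have H := @act_linl _ _ P _ y 1 0 0 t; rewrite !scale1r addr0 in H.
apply: (GRing.addrI ((@act _ _ P _ _) 0 t)); by rewrite addr0 -H.
Qed.

Lemma actD k (E : klinCat k) (P : lmodule E) (x y : Ob E) (f f' : Defs.Hom x y) (t : Mob P x) :
  (@act _ _ P _ _) (f + f') t = (@act _ _ P _ _) f t + (@act _ _ P _ _) f' t.
Proof. by have := @act_linl _ _ P _ _ 1 f f' t; rewrite !scale1r. Qed.

Lemma actr0 k (E : klinCat k) (P : lmodule E) (x y : Ob E) (f : Defs.Hom x y) :
  (@act _ _ P _ _) f 0 = 0.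
Proof.
have H := @act_linr _ _ P _ _ 1 f 0 0; rewrite !scale1r addr0 in H.
apply: (GRing.addrI ((@act _ _ P _ _) f 0)); by rewrite addr0 -H.
Qed.

Lemma comp0 k (E : klinCat k) (x y z : Ob E) (h : Defs.Hom y z) :
  Defs.comp h (0 : Defs.Hom x y) = 0.
Proof.
have H := comp_linr 1 h (0 : Defs.Hom x y) 0; rewrite !scale1r addr0 in H.
apply: (GRing.addrI (Defs.comp h 0)); by rewrite addr0 -H.
Qed.

Lemma compD k (E : klinCat k) (x y z : Ob E) (h : Defs.Hom y z) (g g' : Defs.Hom x y) :
  Defs.comp h (g + g') = Defs.comp h g + Defs.comp h g'.
Proof. by have := comp_linr 1 h g g'; rewrite !scale1r. Qed.

Theorem lemma4p8 (k : fieldType) (E : klinCat k)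
  (P T Q : lmodule E)
  (i : forall x, Mob P x -> Mob T x) (p : forall x, Mob T x -> Mob Q x) :
  left_strictly_locally_finite E ->
  short_exact i p ->
  contrafinite P -> contrafinite Q -> contrafinite T.
Proof.
move=> [[_ Hfin] Hsl] [[iL iN] [[pL pN] [iinj [psurj pker]]]] cP cQ y.
have [AP HAP] := cP y.
pose m w := count (fun z => pb (prec z w)) AP.
pose G w B := forall x, ~ List.In x B -> forall (g : Defs.Hom x w) (h : Defs.Hom w y)
   (t : Mob T x), (@act _ _ T _ _) (Defs.comp h g) t = 0.
have Gmono : forall w B B', G w B -> (forall z, List.In z B -> List.In z B') -> G w B'.
  by move=> w B B' HB HBB' x Hx; apply: HB => /HBB'.
have i0 : forall x, i x 0 = 0.
  move=> x.
  have H := iL x 1 0 0; rewrite !scale1r addr0 in H.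
  apply: (GRing.addrI (i x 0)); by rewrite addr0 -H.
have base : forall w, ~ List.In w AP -> exists B, G w B.
  move=> w HwAP; have [AQ HAQ] := cQ w; exists AQ => x Hx g h t.
  have : p w ((@act _ _ T _ _) g t) = 0 by rewrite pN; apply: HAQ.
  case/pker => u Hu.
  by rewrite act_comp -Hu -iN HAP // i0.
have main : forall n w, (m w < n)%N -> exists B, G w B.
  elim=> [//|n IH] w Hmw.
  case: (classic (List.In w AP)) => HwAP; last exact: base.
  have [X [HXprec HXdec]] := Hsl w.
  have [F HF] := Hfin w w.
  have [BX HBX] : exists B, forall x', List.In x' X -> G x' B.
    apply: collect => // x' Hx'.
    case: (classic (List.In x' AP)) => Hx'AP; last exact: base.
    apply: IH; rewrite -ltnS; apply: leq_trans Hmw.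
    apply: (@count_lt _ _ _ _ x') => //.
    - move=> z /pbE Hz; apply/pbE; exact: prec_trans Hz (HXprec _ Hx').
    - exact/pbE/HXprec.
    - by apply/negP => /pbE [? ?].
  exists (F ++ BX) => x Hx g h t.
  have HxF : ~ List.In x F by move=> H; apply: Hx; apply: List.in_or_app; left.
  have HxB : ~ List.In x BX by move=> H; apply: Hx; apply: List.in_or_app; right.
  case: (classic (hom_nz x w)) => Hnz; last first.
    have -> : g = 0.
      by apply/eqP; apply: contra_notT Hnz => Hg; exists g.
    by rewrite comp0 act0.
  case: (classic (preceq w x)) => Hwx.
    by exfalso; apply: HxF; apply: HF; split => //; apply: preceq_step.
  have Hpr : prec x w by split => //; apply: preceq_step.
  have [n' [xs [gs [hs [Hin ->]]]]] := HXdec x g Hpr.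
  apply: (big_ind (fun a => (@act _ _ T _ _) (Defs.comp h a) t = 0)).
  - by rewrite comp0 act0.
  - by move=> a b Ha Hb; rewrite compD actD Ha Hb addr0.
  - by move=> j _; rewrite comp_assoc; apply: (HBX _ (Hin j)).
have [B HB] := main (m y).+1 y (ltnSn _).
exists B => x Hx f v.
by rewrite -(comp_idl f); apply: HB.
Qed.
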